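(* Let $V$ be a vector space of dimension $n\ge3$ over $\mathbb{F}_q$, let $w$ be a $1$-subspace (point) and $H$ a hyperplane of $V$ with $w\le H$. Let $\Delta^{(1)}$ be the set of $1$-subspaces of $V$ not contained in $H$ and $\Delta^{(2)}$ the set of hyperplanes of $V$ not containing $w$. Let $\Gamma$ be the bipartite graph with vertex set $\Delta^{(1)}\cup\Delta^{(2)}$ in which a point $p\in\Delta^{(1)}$ is adjacent to a hyperplane $K\in\Delta^{(2)}$ iff $p\le K$. Then $\Gamma$ is geodesic-transitive.
   Context: A geodesic of length $\ell$ is a vertex sequence $(v_0,\dots,v_\ell)$ with consecutive vertices adjacent and $d(v_0,v_\ell)=\ell$; a graph is geodesic-transitive if its automorphism group is transitive on geodesics of each length. (This graph is a distance-transitive antipodal $q$-cover of $K_{q^{n-2},q^{n-2}}$ of diameter $4$.) *)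

(* Defs.v *)
From HB Require Import structures.
From mathcomp Require Import all_boot all_order all_algebra all_fingroup.
Set Implicit Arguments. Unset Strict Implicit. Unset Printing Implicit Defensive.
Import GRing.Theory.
Local Open Scope ring_scope.

Section Graph.
Variables (T : finType) (adj : rel T).

Definition walk_len (x y : T) (k : nat) : Prop :=
  exists s : seq T, [/\ size s = k, path adj x s & last x s = y].

(* geodesic (v_0, ..., v_l) given as v_0 = x and s = [:: v_1; ...; v_l]:
   consecutive vertices adjacent and d(v_0, v_l) = l, i.e. there is no
   walk from v_0 to v_l of length < l. *)
Definition geodesic (x : T) (s : seq T) : Prop :=
  path adj x s /\ (forall k, (k < size s)%N -> ~ walk_len x (last x s) k).

Definition graph_aut (g : {perm T}) : Prop :=
  forall u v : T, adj (g u) (g v) = adj u v.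

Definition geodesic_transitive : Prop :=
  forall (x : T) (s : seq T) (y : T) (t : seq T),
    size s = size t -> geodesic x s -> geodesic y t ->
    exists g : {perm T}, [/\ graph_aut g, g x = y & map g s = t].
End Graph.

(* V = 'rV[F]_n; a subspace is represented canonically by a square matrix A
   with <<A>>%MS = A (its row space).  W is the point w, Hm the hyperplane H. *)
Section PG.
Variables (F : finFieldType) (n : nat) (W Hm : 'M[F]_n).

Definition is_subspace (A : 'M[F]_n) : bool := (<<A>>%MS == A).

Definition in_Delta (x : 'M[F]_n + 'M[F]_n) : bool :=
  match x with
  | inl p => [&& is_subspace p, \rank p == 1%N & ~~ (p <= Hm)%MS]
  | inr K => [&& is_subspace K, \rank K == n.-1 & ~~ (W <= K)%MS]
  end.

Definition vtx := {x : 'M[F]_n + 'M[F]_n | in_Delta x}.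

Definition inc_adj_raw (x y : 'M[F]_n + 'M[F]_n) : bool :=
  match x, y with
  | inl p, inr K => (p <= K)%MS
  | inr K, inl p => (p <= K)%MS
  | _, _ => false
  end.

Definition Gamma_adj : rel vtx := fun u v => inc_adj_raw (val u) (val v).
End PG.

(* Main.v *)
Require Import Defs.
From HB Require Import structures.
From mathcomp Require Import all_boot all_order all_algebra all_fingroup.
From mathcomp Require Import zify.
Set Implicit Arguments. Unset Strict Implicit. Unset Printing Implicit Defensive.
Import GRing.Theory.

Local Open Scope ring_scope.

Section LinAlg.
Variable F : fieldType.
Variable n : nat.
Implicit Types (A B K N : 'M[F]_n) (u v : 'rV[F]_n).

Lemma eq_sub_rank m1 m2 (A : 'M[F]_(m1, n)) (B : 'M[F]_(m2, n)) :
  (A <= B)%MS -> (\rank B <= \rank A)%N -> (A == B)%MS.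
Proof.
move=> sAB rBA; have := mxrank_leqif_eq sAB => -[_ <-].
by rewrite eqn_leq rBA mxrankS.
Qed.

Lemma rank_addv m (v : 'rV[F]_n) (A : 'M[F]_(m, n)) :
  ~~ (v <= A)%MS -> \rank (v + A)%MS = (\rank A).+1.
Proof.
move=> vA; have := mxrank_sum_cap v A.
have v0 : v != 0 by apply: contraNneq vA => ->; rewrite sub0mx.
rewrite rank_rV v0.
suff -> : \rank (v :&: A)%MS = 0%N by rewrite addn0 add1n.
apply/eqP; rewrite mxrank_eq0 -submx0; apply/negPn/negP => nz.
have r1 : \rank (v :&: A)%MS = 1%N.
  apply/eqP; rewrite eqn_leq; apply/andP; split.
    by apply: leq_trans (mxrankS (capmxSl v A)) _; rewrite rank_rV v0.
  by rewrite lt0n mxrank_eq0; apply: contra nz => /eqP ->; rewrite sub0mx.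
have e : ((v :&: A)%MS == v)%MS by apply: eq_sub_rank; rewrite ?capmxSl // r1 rank_rV v0.
move/eqmxP: e => e; apply/negP: vA; apply/negPn.
by rewrite -e capmxSr.
Qed.

Lemma rank_adds_le m1 m2 (A : 'M[F]_(m1, n)) (B : 'M[F]_(m2, n)) :
  (\rank (A + B)%MS <= \rank A + \rank B)%N.
Proof. by have [] := mxrank_adds_leqif A B. Qed.

Lemma hyp_sum K m (A : 'M[F]_(m, n)) :
  \rank K = n.-1 -> ~~ (A <= K)%MS -> \rank (A + K)%MS = n.
Proof.
move=> rK AK; apply/eqP; rewrite eqn_leq rank_leq_col /=.
have: (\rank K <= \rank (A + K)%MS)%N by rewrite mxrankS // addsmxSr.
rewrite leq_eqVlt => /orP[/eqP e|]; last first.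
  by rewrite rK; lia.
have: (K == A + K)%MS by apply: eq_sub_rank; rewrite ?addsmxSr // e.
move/eqmxP=> e2; move: AK; rewrite e2 addsmxSl //.
Qed.

Lemma hyp_cap K m (A : 'M[F]_(m, n)) :
  \rank K = n.-1 -> ~~ (A <= K)%MS -> \rank (A :&: K)%MS = (\rank A).-1.
Proof.
move=> rK AK; have := mxrank_sum_cap A K; rewrite hyp_sum // rK.
have : (0 < n)%N.
  case: ltnP => // n0; move: AK; have -> : A = 0.
    by apply/matrixP => i [j ?]; lia.
  by rewrite sub0mx.
lia.
Qed.

End LinAlg.

Local Open Scope ring_scope.

Section L1.
Variable F : fieldType.
Variable n : nat.

Lemma frame_map k (C C' : 'M[F]_(k, n)) (N N' : 'M[F]_n) :
  \rank (C + N)%MS = n -> (k + \rank N)%N = n ->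
  \rank (C' + N')%MS = n -> (k + \rank N')%N = n ->
  exists g : 'M[F]_n, [/\ g \in unitmx, C *m g = C' & (N *m g :=: N')%MS].
Proof.
move=> r1 k1 r2 k2.
have rN : \rank N' = \rank N by lia.
pose P := row_base N.
pose P' : 'M_(\rank N, n) := castmx (rN, erefl n) (row_base N').
pose M := col_mx C P; pose M' := col_mx C' P'.
have eP : (P :=: N)%MS by exact: eq_row_base.
have eP' : (P' :=: N')%MS by apply: eqmx_trans (eqmx_cast _ _) (eq_row_base _).
have rM : \rank M = n.
  by rewrite /M -addsmxE (adds_eqmx (eqmx_refl C) eP).
have rM' : \rank M' = n.
  by rewrite /M' -addsmxE (adds_eqmx (eqmx_refl C') eP').
have fM : row_free M by rewrite /row_free rM; lia.
exists (pinvmx M *m M').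
set g := pinvmx M *m M'.
have MM : M *m g = M' by rewrite /g mulmxA mulmxVp // mul1mx.
have : col_mx (C *m g) (P *m g) = col_mx C' P' by rewrite -mul_col_mx MM.
case/eq_col_mx => e1 e2.
split => //.
  rewrite -row_full_unit /row_full eqn_leq rank_leq_col /=.
  apply: leq_trans (mxrankM_maxr M g); by rewrite MM rM'.
apply: eqmx_trans (eqmxMr _ (eqmx_sym eP)) _; rewrite e2; exact: eP'.
Qed.

End L1.

Local Open Scope ring_scope.

Section Act.
Variables (F : finFieldType) (n : nat) (W Hm : 'M[F]_n).
Variable g : 'M[F]_n.
Hypotheses (gU : g \in unitmx) (gW : (W *m g :=: W)%MS) (gH : (Hm *m g :=: Hm)%MS).

Let gF : row_free g. Proof. by rewrite row_free_unit. Qed.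

Definition actr (x : 'M[F]_n + 'M[F]_n) :=
  match x with inl p => inl <<p *m g>>%MS | inr K => inr <<K *m g>>%MS end.

Lemma actr_in x : in_Delta W Hm x -> in_Delta W Hm (actr x).
Proof.
case: x => [p|K] /= /and3P[_ r s]; rewrite /is_subspace genmx_id eqxx /=
   mxrank_gen mxrankMfree // ?genmxE.
  by rewrite r /= -gH submxMfree.
by rewrite r /= -{1}gW submxMfree.
Qed.

Definition act_v (x : vtx W Hm) : vtx W Hm := exist _ (actr (val x)) (actr_in (valP x)).

Lemma canon_eq (A B : 'M[F]_n) : is_subspace A -> is_subspace B -> (A == B)%MS -> A = B.
Proof.
move=> /eqP eA /eqP eB /eqmxP e; by rewrite -eA -eB; apply: eq_genmx.
Qed.

Lemma act_v_inj : injective act_v.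
Proof.
move=> [x hx] [y hy] /(congr1 val) /= ee; apply: val_inj => /=; move: ee.
case: x hx => [p|K] /and3P[sp _ _]; case: y hy => [p'|K'] /and3P[sp' _ _] //= [] e.
  move/genmxP: e => /andP[e1 e2].
  by congr inl; apply: (canon_eq sp sp'); apply/andP; split; rewrite -(submxMfree _ _ gF).
move/genmxP: e => /andP[e1 e2].
by congr inr; apply: (canon_eq sp sp'); apply/andP; split; rewrite -(submxMfree _ _ gF).
Qed.

Definition act_perm : {perm vtx W Hm} := perm act_v_inj.

Lemma act_permE x : act_perm x = act_v x. Proof. by rewrite permE. Qed.

Lemma act_perm_aut : graph_aut (@Gamma_adj F n W Hm) act_perm.
Proof.
move=> [u hu] [v hv]; rewrite !act_permE /Gamma_adj /=.
by case: u hu => [p|K] _; case: v hv => [p'|K'] _ //=; rewrite !genmxE submxMfree.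
Qed.

End Act.

Local Open Scope ring_scope.

Section Flag.
Variable F : fieldType.
Variable n : nat.

Lemma nz_row_neq0 m (A : 'M[F]_(m, n)) : \rank A != 0%N -> nz_row A != 0.
Proof. by rewrite nz_row_eq0 mxrank_eq0. Qed.

Lemma vec_eqmx m (u : 'rV[F]_n) (P : 'M[F]_(m, n)) :
  (u <= P)%MS -> u != 0 -> \rank P = 1%N -> (u :=: P)%MS.
Proof.
move=> uP u0 rP; apply/eqmxP; apply: eq_sub_rank => //; by rewrite rP rank_rV u0.
Qed.

Lemma pt_eqmx m (P : 'M[F]_(m, n)) : \rank P = 1%N -> (nz_row P :=: P)%MS.
Proof.
move=> rP; apply: vec_eqmx => //; first exact: nz_row_sub.
by apply: nz_row_neq0; rewrite rP.
Qed.

Lemma notin_compl (Q : 'M[F]_n) (b : 'rV[F]_n) : (b <= Q^C)%MS -> b != 0 -> ~~ (b <= Q)%MS.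
Proof.
move=> bC b0; apply/negP => bQ; move/negP: b0; apply; rewrite -submx0 -(capmx_compl Q).
by rewrite sub_capmx bQ.
Qed.

Lemma rank_diff_sub m (Q : 'M[F]_n) (P : 'M[F]_(m, n)) : (P <= Q)%MS ->
  (\rank (Q :\: P)%MS + \rank P)%N = \rank Q.
Proof.
move=> PQ.
have e1 : (Q :&: P :=: P)%MS by apply/eqmxP; rewrite capmxSr sub_capmx PQ submx_refl.
have := mxrank_sum_cap (Q :\: P)%MS (Q :&: P)%MS.
rewrite (addsmx_diff_cap_eq Q P).
have -> : \rank ((Q :\: P) :&: (Q :&: P))%MS = 0%N.
  apply/eqP; rewrite mxrank_eq0 -submx0 -(capmx_diff Q P).
  by rewrite sub_capmx capmxSl /= (submx_trans (capmxSr _ _)) // capmxSr.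
by rewrite addn0 e1 => ->.
Qed.

Lemma diff_cap0 m (Q : 'M[F]_n) (P : 'M[F]_(m, n)) (u : 'rV[F]_n) : (u <= Q :\: P)%MS -> (u <= P)%MS -> u = 0.
Proof.
move=> h1 h2; apply/eqP; rewrite -submx0 -(capmx_diff Q P) sub_capmx h1 h2 //.
Qed.

Lemma flag_map (P Q P' Q' : 'M[F]_n) :
  (2 <= n)%N ->
  \rank P = 1%N -> \rank Q = n.-1 -> (P <= Q)%MS ->
  \rank P' = 1%N -> \rank Q' = n.-1 -> (P' <= Q')%MS ->
  exists g : 'M[F]_n, [/\ g \in unitmx, (P *m g :=: P')%MS & (Q *m g :=: Q')%MS].
Proof.
move=> n2.
have gen : forall P Q : 'M[F]_n, \rank P = 1%N -> \rank Q = n.-1 -> (P <= Q)%MS ->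
   let C := col_mx (nz_row P) (nz_row (Q^C)%MS) in
   [/\ \rank (C + (Q :\: P))%MS = n, (2 + \rank (Q :\: P))%N = n &
       ((nz_row P + (Q :\: P))%MS :=: Q)%MS].
  move=> P0 Q0 rP rQ PQ C.
  have rD := rank_diff_sub PQ; rewrite rP rQ in rD.
  have aP := pt_eqmx rP.
  have a0 : nz_row P0 != 0 by apply: nz_row_neq0; rewrite rP.
  have b0 : nz_row (Q0^C)%MS != 0 by apply: nz_row_neq0; rewrite mxrank_compl rQ; lia.
  have bQ : ~~ (nz_row (Q0^C)%MS <= Q0)%MS by apply: notin_compl => //; exact: nz_row_sub.
  have aD : ~~ (nz_row P0 <= Q0 :\: P0)%MS.
    by apply/negP => h; move/negP: a0; apply; rewrite (diff_cap0 h) ?nz_row_sub.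
  have eQ : ((nz_row P0 + (Q0 :\: P0))%MS :=: Q0)%MS.
    apply/eqmxP; apply: eq_sub_rank.
      by rewrite addsmx_sub diffmxSl (submx_trans (nz_row_sub _)).
    by rewrite rank_addv // rQ; lia.
  split => //; last by lia.
  rewrite /C (adds_eqmx (eqmx_sym (addsmxE _ _)) (eqmx_refl _)).
  rewrite -addsmxA [(nz_row (Q0^C)%MS + _)%MS]addsmxC addsmxA addsmxC.
  by rewrite (adds_eqmx (eqmx_refl _) eQ) rank_addv // rQ; lia.
move=> rP rQ PQ rP' rQ' PQ'.
have [r1 k1 e1] := gen _ _ rP rQ PQ.
have [r2 k2 e2] := gen _ _ rP' rQ' PQ'.
have [g [gU eC eN]] := frame_map r1 k1 r2 k2.
move: eC; rewrite mul_col_mx => /eq_col_mx [ea _].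
exists g; split => //.
  apply: eqmx_trans (eqmxMr _ (eqmx_sym (pt_eqmx rP))) _.
  by rewrite ea; exact: pt_eqmx.
apply: eqmx_trans (eqmxMr _ (eqmx_sym e1)) _.
apply: eqmx_trans (addsmxMr _ _ _) _.
rewrite ea; apply: eqmx_trans _ e2.
exact: adds_eqmx (eqmx_refl _) eN.
Qed.

End Flag.

Local Open Scope ring_scope.

Section Perp.
Variable F : fieldType.
Variable n : nat.
Implicit Types A B : 'M[F]_n.

Definition dl (A : 'M[F]_n) : 'M[F]_n := kermx A^T.

Lemma dl_rank A : \rank (dl A) = (n - \rank A)%N.
Proof. by rewrite mxrank_ker mxrank_tr. Qed.

Lemma dl_anti A B : (A <= B)%MS -> (dl B <= dl A)%MS.
Proof.
case/submxP => X ->; apply/sub_kermxP.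
by rewrite trmx_mul mulmxA (sub_kermxP (submx_refl _)) mul0mx.
Qed.

Lemma dl_dd A : (dl (dl A) :=: A)%MS.
Proof.
have sA : (A <= dl (dl A))%MS.
  apply/sub_kermxP; rewrite -(trmxK A) -trmx_mul trmxK.
  by rewrite (sub_kermxP (submx_refl _)) trmx0.
have h1 := rank_leq_col A.
have /eqmxP e : (A == dl (dl A))%MS by apply: eq_sub_rank sA _; rewrite !dl_rank; lia.
exact: eqmx_sym e.
Qed.

Lemma dl_sub A B : (dl B <= dl A)%MS = (A <= B)%MS.
Proof.
apply/idP/idP; last exact: dl_anti.
by move/dl_anti; rewrite !dl_dd.
Qed.

End Perp.

Local Open Scope ring_scope.

Section Dual.
Variables (F : finFieldType) (n : nat) (W Hm : 'M[F]_n).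
Hypotheses (n3 : (3 <= n)%N) (rW : \rank W = 1%N) (rH : \rank Hm = n.-1).
Variable g : 'M[F]_n.
Hypotheses (gU : g \in unitmx) (gW : (dl Hm *m g :=: W)%MS) (gH : (dl W *m g :=: Hm)%MS).

Let gF : row_free g. Proof. by rewrite row_free_unit. Qed.

Definition dualr (x : 'M[F]_n + 'M[F]_n) :=
  match x with inl p => inr <<dl p *m g>>%MS | inr K => inl <<dl K *m g>>%MS end.

Lemma dualr_in x : in_Delta W Hm x -> in_Delta W Hm (dualr x).
Proof.
case: x => [p|K] /= /and3P[_ /eqP r s]; rewrite /is_subspace genmx_id eqxx /=
   mxrank_gen mxrankMfree // dl_rank r ?genmxE.
  by rewrite -gW submxMfree // dl_sub s andbT; apply/eqP; lia.
by rewrite -gH submxMfree // dl_sub s andbT; apply/eqP; lia.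
Qed.

Definition dual_v (x : vtx W Hm) : vtx W Hm := exist _ (dualr (val x)) (dualr_in (valP x)).

Lemma dual_v_inj : injective dual_v.
Proof.
move=> [x hx] [y hy] /(congr1 val) /= ee; apply: val_inj => /=; move: ee.
case: x hx => [p|K] /and3P[sp _ _]; case: y hy => [p'|K'] /and3P[sp' _ _] /= e; try by [].
  case: e => /genmxP /andP[e1 e2].
  congr inl; apply: (canon_eq sp sp'); apply/andP; split; rewrite -dl_sub -(submxMfree _ _ gF) //.
case: e => /genmxP /andP[e1 e2].
congr inr; apply: (canon_eq sp sp'); apply/andP; split; rewrite -dl_sub -(submxMfree _ _ gF) //.
Qed.

Definition dual_perm : {perm vtx W Hm} := perm dual_v_inj.

Lemma dual_permE x : dual_perm x = dual_v x. Proof. by rewrite permE. Qed.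

Lemma dual_perm_aut : graph_aut (@Gamma_adj F n W Hm) dual_perm.
Proof.
move=> [u hu] [v hv]; rewrite !dual_permE /Gamma_adj /=.
by case: u hu => [p|K] _; case: v hv => [p'|K'] _ //=; rewrite !genmxE submxMfree // dl_sub.
Qed.

Lemma dual_perm_point x : exists p, val (dual_perm x) = inl p \/ val x = inl p.
Proof.
rewrite dual_permE /=; case: (val x) => [p|K] /=; last by exists <<dl K *m g>>%MS; left.
by exists p; right.
Qed.

End Dual.

Section GraphAut.
Variables (T : finType) (adj : rel T).

Lemma aut_path (g : {perm T}) x s : graph_aut adj g ->
  path adj (g x) (map g s) = path adj x s.
Proof. by move=> ga; elim: s x => //= y s IH x; rewrite ga IH. Qed.

Lemma aut_walk (g : {perm T}) x y k : graph_aut adj g ->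
  walk_len adj x y k -> walk_len adj (g x) (g y) k.
Proof.
move=> ga [s [e1 e2 e3]]; exists (map g s); split.
- by rewrite size_map.
- by rewrite aut_path.
- by rewrite last_map e3.
Qed.

Lemma aut_inv (g : {perm T}) : graph_aut adj g -> graph_aut adj g^-1.
Proof. by move=> ga u v; rewrite -ga !permKV. Qed.

Lemma aut_mul (g h : {perm T}) : graph_aut adj g -> graph_aut adj h -> graph_aut adj (g * h).
Proof. by move=> ga ha u v; rewrite !permM ha ga. Qed.

Lemma aut_geo (g : {perm T}) x s : graph_aut adj g ->
  geodesic adj x s -> geodesic adj (g x) (map g s).
Proof.
move=> ga [p nw]; split; first by rewrite aut_path.
move=> k; rewrite size_map => ks w; apply: (nw k ks).
have := aut_walk (aut_inv ga) w; rewrite last_map !permK; exact.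
Qed.

Lemma geo_walk x s y k : geodesic adj x s -> walk_len adj x y k ->
  (k < size s)%N -> y <> last x s.
Proof. by move=> [_ nw] w ks e; apply: (nw k ks); rewrite -e. Qed.

Lemma geo_take x s m : geodesic adj x s -> geodesic adj x (take m s).
Proof.
move=> [p nw]; split.
  by move: p; rewrite -{1}(cat_take_drop m s) cat_path => /andP[].
move=> k ks [w [sw pw lw]]; apply: (nw (k + size (drop m s))%N).
  move: ks; rewrite size_take size_drop; case: (ltnP m (size s)) => h ks; lia.
exists (w ++ drop m s); split.
- by rewrite size_cat sw.
- move: p; rewrite -{1}(cat_take_drop m s) !cat_path => /andP[_]; by rewrite pw lw.
- by rewrite last_cat lw -last_cat cat_take_drop.
Qed.

End GraphAut.

Local Open Scope ring_scope.

Section Gen.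
Variable F : fieldType.
Variable n : nat.

Lemma subv_sub m (u v : 'rV[F]_n) (A : 'M[F]_(m, n)) :
  (u <= A)%MS -> (v <= A)%MS -> ((u - v)%R <= A)%MS.
Proof. by move=> uA vA; apply: addmx_sub uA _; rewrite eqmx_opp. Qed.

Lemma sub_adds_l m1 m2 m3 (A : 'M[F]_(m1, n)) (B : 'M[F]_(m2, n)) (C : 'M[F]_(m3, n)) :
  (A <= B)%MS -> (A <= B + C)%MS.
Proof. by move=> h; apply: submx_trans h (addsmxSl _ _). Qed.

Lemma sub_adds_r m1 m2 m3 (A : 'M[F]_(m1, n)) (B : 'M[F]_(m2, n)) (C : 'M[F]_(m3, n)) :
  (A <= C)%MS -> (A <= B + C)%MS.
Proof. by move=> h; apply: submx_trans h (addsmxSr _ _). Qed.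

Lemma tr_sum2 (u v u' v' : 'rV[F]_n) (N N' g : 'M[F]_n) :
  u *m g = u' -> v *m g = v' -> (N *m g :=: N')%MS ->
  ((u + (v + N))%MS *m g :=: u' + (v' + N'))%MS.
Proof.
move=> eu ev eN; apply: eqmx_trans (addsmxMr _ _ _) _; rewrite eu.
apply: adds_eqmx (eqmx_refl _) _; apply: eqmx_trans (addsmxMr _ _ _) _; rewrite ev.
exact: adds_eqmx (eqmx_refl _) eN.
Qed.

End Gen.

Local Open Scope ring_scope.

Ltac alia := repeat match goal with
 | H : ?T |- _ => lazymatch T with
     | @eq nat _ _ => fail
     | is_true (leq _ _) => fail
     | _ => clear H
   end
 end; lia.

Section Main.
Variables (F : finFieldType) (n : nat) (W Hm : 'M[F]_n).
Hypotheses (n3 : (3 <= n)%N) (rW : \rank W = 1%N) (rH : \rank Hm = n.-1) (WH : (W <= Hm)%MS).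

Definition zH : 'rV[F]_n := nz_row (dl Hm).
Definition hf (u : 'rV[F]_n) : F := (u *m zH^T) 0 0.

Lemma hfD u v : hf (u + v) = hf u + hf v.
Proof. by rewrite /hf mulmxDl mxE. Qed.
Lemma hfB u v : hf (u - v) = hf u - hf v.
Proof. by rewrite /hf mulmxDl mulNmx !mxE. Qed.
Lemma hfZ a u : hf (a *: u) = a * hf u.
Proof. by rewrite /hf -scalemxAl mxE. Qed.

Lemma rdlH : \rank (dl Hm) = 1%N.
Proof. rewrite dl_rank rH; alia. Qed.

Lemma HzH : Hm *m zH^T = 0.
Proof.
have : (zH <= dl Hm)%MS by exact: nz_row_sub.
move/sub_kermxP => h; have := congr1 trmx h.
by rewrite trmx_mul trmxK trmx0.
Qed.

Lemma inH u : (u <= Hm)%MS = (hf u == 0).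
Proof.
have z0 : zH != 0 by apply: nz_row_neq0; rewrite rdlH.
have eK : (Hm == kermx zH^T)%MS.
  apply: eq_sub_rank; first by apply/sub_kermxP; exact: HzH.
  rewrite mxrank_ker mxrank_tr rank_rV z0 rH; alia.
move/eqmxP: eK => eK.
rewrite eK; apply/sub_kermxP/eqP => h; first by rewrite /hf h mxE.
by rewrite [LHS]mx11_scalar; move: h; rewrite /hf => ->; rewrite raddf0.
Qed.

Definition nv (u : 'rV[F]_n) := (hf u)^-1 *: u.

Lemma hf_nv u : hf u != 0 -> hf (nv u) = 1.
Proof. by move=> h; rewrite /nv hfZ mulVf. Qed.

Lemma nv_sub m u (A : 'M[F]_(m, n)) : (u <= A)%MS -> (nv u <= A)%MS.
Proof. by move=> h; rewrite /nv scalemx_sub. Qed.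

Definition pv (p : 'M[F]_n) := nv (nz_row p).

Lemma pv_props p : \rank p = 1%N -> ~~ (p <= Hm)%MS ->
  [/\ hf (pv p) = 1, (pv p <= p)%MS, pv p != 0, ~~ (pv p <= Hm)%MS & (pv p == p)%MS].
Proof.
move=> r1 pH.
have nzH : hf (nz_row p) != 0.
  rewrite -inH; apply: contra pH => h.
  by rewrite -(pt_eqmx r1).
have h1 := hf_nv nzH.
have s1 : (pv p <= p)%MS by apply: nv_sub; exact: nz_row_sub.
have nz : pv p != 0 by apply/eqP => e; move: h1; rewrite -/(pv p) e /hf mul0mx mxE => /esym/eqP; rewrite oner_eq0.
have nH : ~~ (pv p <= Hm)%MS by rewrite inH h1 oner_eq0.
split => //; apply/eqmxP; exact: vec_eqmx.
Qed.

Lemma canon_pt p : is_subspace p -> \rank p = 1%N -> ~~ (p <= Hm)%MS -> p = <<pv p>>%MS.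
Proof.
move=> /eqP sp r1 pH; have [_ _ _ _ /eqmxP e] := pv_props r1 pH.
by rewrite -{1}sp; apply: eq_genmx; apply: eqmx_sym.
Qed.

Lemma rank_addpt m (P : 'M[F]_n) (A : 'M[F]_(m, n)) :
  \rank P = 1%N -> ~~ (P <= A)%MS -> \rank (P + A)%MS = (\rank A).+1.
Proof.
move=> r1 PA; rewrite -(adds_eqmx (pt_eqmx r1) (eqmx_refl A)) rank_addv //.
by rewrite (pt_eqmx r1).
Qed.

Definition hypE (P : 'M[F]_n) : 'M[F]_n := (P + (P + W)^C)%MS.

Lemma hypE_props (P : 'M[F]_n) : ~~ (W <= P)%MS ->
  [/\ \rank (hypE P) = n.-1, ~~ (W <= hypE P)%MS & (P <= hypE P)%MS].
Proof.
move=> WP; rewrite /hypE.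
have rPW : \rank (P + W)%MS = (\rank P).+1 by rewrite addsmxC rank_addpt.
have rX := mxrank_compl (P + W)%MS.
have c0 : \rank (P :&: (P + W)^C)%MS = 0%N.
  apply/eqP; rewrite mxrank_eq0 -submx0 -(capmx_compl (P + W)%MS).
  by rewrite sub_capmx capmxSr andbT (submx_trans (capmxSl _ _)) // addsmxSl.
have := mxrank_sum_cap P (P + W)^C%MS; rewrite c0 addn0 rX rPW.
have := rank_leq_col (P + W)%MS; rewrite rPW => hle hs.
have rS : \rank (P + (P + W)^C)%MS = n.-1 by alia.
split => //; last exact: addsmxSl.
apply/negP => WS.
have : ((P + W + (P + W)^C)%MS <= P + (P + W)^C)%MS.
  by rewrite addsmx_sub addsmx_sub addsmxSl WS addsmxSr.
move/mxrankS; have := addsmx_compl_full (P + W)%MS; rewrite /row_full => /eqP ->.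
rewrite rS; alia.
Qed.

Definition frC (c0 c1 c2 : 'rV[F]_n) : 'M[F]_(1 + (1 + 1), n) := col_mx c0 (col_mx c1 c2).
Definition is_frame (c0 c1 c2 : 'rV[F]_n) (N : 'M[F]_n) :=
  [&& \rank (frC c0 c1 c2 + N)%MS == n, (3 + \rank N == n)%N, (W == c1)%MS
    & (Hm == c1 + (c2 + N))%MS].

Lemma frC_eq (c0 c1 c2 : 'rV[F]_n) (N : 'M[F]_n) :
  (frC c0 c1 c2 + N :=: c0 + (c1 + (c2 + N)))%MS.
Proof.
apply: eqmx_trans (adds_eqmx (eqmx_sym (addsmxE _ _)) (eqmx_refl N)) _.
apply: eqmx_trans (adds_eqmx (adds_eqmx (eqmx_refl c0) (eqmx_sym (addsmxE _ _))) (eqmx_refl N)) _.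
by rewrite -!addsmxA; apply: eqmx_refl.
Qed.

Lemma FL (c0 c1 c2 : 'rV[F]_n) (K1 N : 'M[F]_n) :
  \rank K1 = n.-1 -> ~~ (W <= K1)%MS -> (c0 <= K1)%MS -> ~~ (c0 <= Hm)%MS ->
  (c1 <= W)%MS -> c1 != 0 -> (c2 <= K1)%MS -> (c2 <= Hm)%MS -> ~~ (c2 <= N)%MS ->
  (N <= K1)%MS -> (N <= Hm)%MS -> \rank N = (n - 3)%N ->
  is_frame c0 c1 c2 N /\ (K1 == c0 + (c2 + N))%MS.
Proof.
move=> rK WK c0K c0H c1W c10 c2K c2H c2N NK NH rN.
have eW : (c1 :=: W)%MS := vec_eqmx c1W c10 rW.
have c1K : ~~ (c1 <= K1)%MS by rewrite eW.
have r2 : \rank (c2 + N)%MS = (n - 2)%N by rewrite rank_addv // rN; alia.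
have s2K : (c2 + N <= K1)%MS by rewrite addsmx_sub c2K NK.
have s2H : (c2 + N <= Hm)%MS by rewrite addsmx_sub c2H NH.
have c0n : ~~ (c0 <= c2 + N)%MS by apply: contra c0H => h; apply: submx_trans h s2H.
have /eqmxP eK : (c0 + (c2 + N) == K1)%MS.
  apply: eq_sub_rank; first by rewrite addsmx_sub c0K s2K.
  rewrite rank_addv // r2 rK; alia.
have c1n : ~~ (c1 <= c2 + N)%MS by apply: contra c1K => h; apply: submx_trans h s2K.
have /eqmxP eH : (c1 + (c2 + N) == Hm)%MS.
  apply: eq_sub_rank; first by rewrite addsmx_sub (submx_trans c1W WH) s2H.
  by rewrite rank_addv // r2 rH; alia.
split; last by apply/eqmxP; apply: eqmx_sym.
apply/and4P; split.
- rewrite (frC_eq c0 c1 c2 N) (adds_eqmx (eqmx_refl c0) eH) rank_addv // rH; apply/eqP; alia.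
- rewrite rN; apply/eqP; alia.
- by apply/eqmxP; apply: eqmx_sym.
- by apply/eqmxP; apply: eqmx_sym.
Qed.

Definition K1f (c0 c2 : 'rV[F]_n) (N : 'M[F]_n) : 'M[F]_n := <<(c0 + (c2 + N))%MS>>%MS.
Definition K3f (c0 c1 c2 : 'rV[F]_n) (N : 'M[F]_n) : 'M[F]_n :=
  <<((c0 + c1)%R + ((c0 + c2)%R + N))%MS>>%MS.
Definition seqF (c0 c1 c2 : 'rV[F]_n) (N : 'M[F]_n) : seq ('M[F]_n + 'M[F]_n) :=
  [:: inr (K1f c0 c2 N); inl <<(c0 + c2)%R>>%MS; inr (K3f c0 c1 c2 N); inl <<(c0 + c1)%R>>%MS].

Lemma gen_mul m (A : 'M[F]_(m, n)) (g : 'M[F]_n) : <<(<<A>>%MS *m g)>>%MS = <<A *m g>>%MS.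
Proof. exact: eq_genmx (eqmxMr g (genmxE A)). Qed.

Lemma transport (c0 c1 c2 : 'rV[F]_n) N (c0' c1' c2' : 'rV[F]_n) N' :
  is_frame c0 c1 c2 N -> is_frame c0' c1' c2' N' ->
  exists g, [/\ g \in unitmx, (W *m g == W)%MS, (Hm *m g == Hm)%MS,
     actr g (inl <<c0>>%MS) = inl <<c0'>>%MS &
     map (actr g) (seqF c0 c1 c2 N) = seqF c0' c1' c2' N'].
Proof.
move=> /and4P[/eqP r1 /eqP k1 /eqmxP eW /eqmxP eH] /and4P[/eqP r2 /eqP k2 /eqmxP eW' /eqmxP eH'].
have [g [gU eC eN]] := frame_map r1 k1 r2 k2.
move: eC; rewrite /frC !mul_col_mx => /eq_col_mx [e0 /eq_col_mx [e1 e2]].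
exists g; split => //.
- apply/eqmxP; apply: eqmx_trans (eqmxMr _ eW) _; rewrite e1; exact: eqmx_sym.
- apply/eqmxP; apply: eqmx_trans (eqmxMr _ eH) _.
  apply: eqmx_trans (tr_sum2 e1 e2 eN) _; exact: eqmx_sym.
- by rewrite /= gen_mul e0.
rewrite /seqF /K1f /K3f /= !gen_mul !mulmxDl e0 e2.
congr [:: _; _; _; _].
- by congr inr; apply: eq_genmx; exact: tr_sum2 e0 e2 eN.
- by congr inr; apply: eq_genmx; apply: tr_sum2 eN; rewrite mulmxDl ?e0 ?e1 ?e2.
- by rewrite e1.
Qed.

Lemma WnK (K : 'M[F]_n) : ~~ (W <= K)%MS -> ~~ (Hm <= K)%MS.
Proof. by apply: contra => h; apply: submx_trans WH h. Qed.

Lemma caseA (c0 c2 : 'rV[F]_n) (K1 : 'M[F]_n) :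
  \rank K1 = n.-1 -> ~~ (W <= K1)%MS -> (c0 <= K1)%MS -> ~~ (c0 <= Hm)%MS ->
  (c2 <= K1)%MS -> (c2 <= Hm)%MS -> c2 != 0 ->
  exists c1 N, is_frame c0 c1 c2 N /\ (K1 == c0 + (c2 + N))%MS.
Proof.
move=> rK WK c0K c0H c2K c2H c20.
have rA : \rank (Hm :&: K1)%MS = (n - 2)%N by rewrite hyp_cap // ?WnK // rH; alia.
have c2A : (c2 <= Hm :&: K1)%MS by rewrite sub_capmx c2H c2K.
have rN := rank_diff_sub c2A; rewrite rank_rV c20 rA in rN.
exists (nz_row W), ((Hm :&: K1) :\: c2)%MS.
apply: FL => //.
- exact: nz_row_sub.
- by apply: nz_row_neq0; rewrite rW.
- by apply/negP => h; move/negP: c20; apply; rewrite (diff_cap0 h).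
- exact: submx_trans (diffmxSl _ _) (capmxSr _ _).
- exact: submx_trans (diffmxSl _ _) (capmxSl _ _).
- alia.
Qed.

Lemma caseB (c0 c2 : 'rV[F]_n) (K1 K3 : 'M[F]_n) :
  \rank K1 = n.-1 -> ~~ (W <= K1)%MS -> (c0 <= K1)%MS -> ~~ (c0 <= Hm)%MS ->
  (c2 <= K1)%MS -> (c2 <= Hm)%MS ->
  \rank K3 = n.-1 -> ~~ (W <= K3)%MS -> ~~ (c0 <= K3)%MS -> ((c0 + c2)%R <= K3)%MS ->
  hf c0 = 1 ->
  exists c1 N, [/\ is_frame c0 c1 c2 N, (K1 == c0 + (c2 + N))%MS,
     (K3 == (c0 + c1)%R + ((c0 + c2)%R + N))%MS &
     (((c0 + W)%MS :&: K3)%MS == (c0 + c1)%R)%MS].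
Proof.
move=> rK WK c0K c0H c2K c2H rkK3 WK3 c0K3 v2K3 hc0.
have c2K3 : ~~ (c2 <= K3)%MS.
  apply: contra c0K3 => h; have := subv_sub v2K3 h; by rewrite addrK.
have c20 : c2 != 0 by apply: contra c2K3 => /eqP ->; rewrite sub0mx.
set CW := (c0 + W)%MS.
have c0W : ~~ (c0 <= W)%MS by apply: contra c0H => h; apply: submx_trans h WH.
have rCW : \rank CW = 2%N by rewrite /CW rank_addv // rW.
have CWK3 : ~~ (CW <= K3)%MS by apply: contra WK3 => h; apply: submx_trans (addsmxSr _ _) h.
have CWH : ~~ (CW <= Hm)%MS by apply: contra c0H => h; apply: submx_trans (addsmxSl _ _) h.
have rR : \rank (CW :&: K3)%MS = 1%N by rewrite hyp_cap // rCW.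
have /eqmxP eCWH : (W == CW :&: Hm)%MS.
  apply: eq_sub_rank; first by rewrite sub_capmx addsmxSr WH.
  by rewrite hyp_cap // rCW rW.
set r := nz_row (CW :&: K3)%MS.
have r0 : r != 0 by apply: nz_row_neq0; rewrite rR.
have rCK : (r <= CW :&: K3)%MS by exact: nz_row_sub.
have rK3 : (r <= K3)%MS := submx_trans rCK (capmxSr _ _).
have rCW' : (r <= CW)%MS := submx_trans rCK (capmxSl _ _).
have rH' : ~~ (r <= Hm)%MS.
  apply/negP => h; move/negP: WK3; apply.
  have rW' : (r <= W)%MS by rewrite eCWH sub_capmx rCW' h.
  by rewrite -(vec_eqmx rW' r0 rW).
have hr : hf r != 0 by rewrite -inH.
set c1 := (nv r - c0)%R.
have e01 : (c0 + c1)%R = nv r by rewrite /c1 addrC subrK.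
have c1H : (c1 <= Hm)%MS.
  by rewrite inH /c1 hfB hf_nv // hc0 subrr.
have nvCW : (nv r <= CW)%MS := nv_sub rCW'.
have nvK3 : (nv r <= K3)%MS := nv_sub rK3.
have c1CW : (c1 <= CW)%MS := subv_sub nvCW (addsmxSl c0 W).
have c1W : (c1 <= W)%MS by rewrite eCWH sub_capmx c1CW c1H.
have c10 : c1 != 0.
  apply: contra c0K3 => /eqP c1e.
  have : (c0 + c1)%R = c0 by rewrite c1e addr0.
  by rewrite e01 => <-.
have rA : \rank (Hm :&: K1)%MS = (n - 2)%N by rewrite hyp_cap // ?WnK // rH; alia.
have c2A : (c2 <= Hm :&: K1)%MS by rewrite sub_capmx c2H c2K.
have AK3 : ~~ (Hm :&: K1 <= K3)%MS by apply: contra c2K3 => h; apply: submx_trans c2A h.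
set N := ((Hm :&: K1) :&: K3)%MS.
have rN : \rank N = (n - 3)%N by rewrite /N hyp_cap // rA; alia.
have NK3 : (N <= K3)%MS by exact: capmxSr.
have NK1 : (N <= K1)%MS by exact: submx_trans (capmxSl _ _) (capmxSr _ _).
have NH : (N <= Hm)%MS by exact: submx_trans (capmxSl _ _) (capmxSl _ _).
have [fr eK1] : is_frame c0 c1 c2 N /\ (K1 == c0 + (c2 + N))%MS.
  apply: FL => //; by apply: contra c2K3 => h; apply: submx_trans h NK3.
exists c1, N; split => //.
- have v2N : ~~ ((c0 + c2)%R <= N)%MS.
    apply: contra c0H => h; have := subv_sub (submx_trans h NH) c2H; by rewrite addrK.
  have SK1 : ((c0 + c2)%R + N <= K1)%MS by rewrite addsmx_sub (addmx_sub c0K c2K) NK1.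
  have c1K : ~~ (c1 <= K1)%MS by rewrite (vec_eqmx c1W c10 rW).
  have v1S : ~~ ((c0 + c1)%R <= (c0 + c2)%R + N)%MS.
    apply: contra c1K => h; have := subv_sub (submx_trans h SK1) c0K.
    by rewrite addrC addKr.
  apply/eqmxP; apply: eqmx_sym; apply/eqmxP; apply: eq_sub_rank.
    by rewrite addsmx_sub e01 nvK3 addsmx_sub v2K3 NK3.
  by rewrite rank_addv // rank_addv // rN rkK3; alia.
- rewrite e01; apply/eqmxP; apply: eqmx_sym; apply: vec_eqmx rR.
    by rewrite sub_capmx nvCW nvK3.
  by apply/eqP => e; move: (hf_nv hr); rewrite e /hf mul0mx mxE => /esym/eqP; rewrite oner_eq0.
Qed.


Local Notation adj := (@Gamma_adj F n W Hm).
Local Notation V := (@vtx F n W Hm).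

Lemma vpt (v : V) p : val v = inl p -> [/\ is_subspace p, \rank p = 1%N & ~~ (p <= Hm)%MS].
Proof. by move=> e; have := valP v; rewrite e => /and3P[a /eqP b c]. Qed.

Lemma vhp (v : V) K : val v = inr K -> [/\ is_subspace K, \rank K = n.-1 & ~~ (W <= K)%MS].
Proof. by move=> e; have := valP v; rewrite e => /and3P[a /eqP b c]. Qed.

Lemma adj_ph (u v : V) p : adj u v -> val u = inl p -> exists K, val v = inr K /\ (p <= K)%MS.
Proof.
rewrite /Gamma_adj => a e; move: a; rewrite e; case: (val v) => [q|K] //= h; by exists K.
Qed.

Lemma adj_hp (u v : V) K : adj u v -> val u = inr K -> exists p, val v = inl p /\ (p <= K)%MS.
Proof.
rewrite /Gamma_adj => a e; move: a; rewrite e; case: (val v) => [q|K'] //= h; by exists q.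
Qed.

Lemma mkP_in (u : 'rV[F]_n) : ~~ (u <= Hm)%MS -> in_Delta W Hm (inl <<u>>%MS).
Proof.
move=> uH; have u0 : u != 0 by apply: contra uH => /eqP ->; rewrite sub0mx.
by rewrite /= /is_subspace genmx_id eqxx mxrank_gen rank_rV u0 genmxE uH.
Qed.

Lemma mkH_in (A : 'M[F]_n) : \rank A = n.-1 -> ~~ (W <= A)%MS -> in_Delta W Hm (inr <<A>>%MS).
Proof.
by move=> rA WA; rewrite /= /is_subspace genmx_id eqxx mxrank_gen rA genmxE WA eqxx.
Qed.

Definition mkP u (h : ~~ (u <= Hm)%MS) : V := exist (in_Delta W Hm) _ (mkP_in h).
Definition mkH A (h1 : \rank A = n.-1) (h2 : ~~ (W <= A)%MS) : V := exist (in_Delta W Hm) _ (mkH_in h1 h2).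

Lemma canon_of (A : 'M[F]_n) m (B : 'M[F]_(m, n)) : is_subspace A -> (A == B)%MS -> A = <<B>>%MS.
Proof. by move=> /eqP e /eqmxP h; rewrite -e; exact: eq_genmx h. Qed.

Lemma caseA' (c0 : 'rV[F]_n) (K1 : 'M[F]_n) :
  \rank K1 = n.-1 -> ~~ (W <= K1)%MS -> (c0 <= K1)%MS -> ~~ (c0 <= Hm)%MS ->
  exists c1 c2 N, is_frame c0 c1 c2 N /\ (K1 == c0 + (c2 + N))%MS.
Proof.
move=> rK WK c0K c0H.
have rA : \rank (Hm :&: K1)%MS = (n - 2)%N by rewrite hyp_cap // ?WnK // rH; alia.
set c2 := nz_row (Hm :&: K1)%MS.
have c20 : c2 != 0 by apply: nz_row_neq0; rewrite rA; alia.
have c2A : (c2 <= Hm :&: K1)%MS by exact: nz_row_sub.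
have [c1 [N h]] := caseA rK WK c0K c0H (submx_trans c2A (capmxSr _ _)) (submx_trans c2A (capmxSl _ _)) c20.
by exists c1, c2, N.
Qed.

Lemma frame_exists (x : V) s p : geodesic adj x s -> val x = inl p -> (size s <= 4)%N ->
  exists c0 c1 c2 N, [/\ is_frame c0 c1 c2 N, val x = inl <<c0>>%MS &
     map val s = take (size s) (seqF c0 c1 c2 N)].
Proof.
move=> gx xp l4.
have [sp rp pH] := vpt xp.
have [hc0 c0p c00 c0H /eqmxP ec0] := pv_props rp pH.
set c0 := pv p in hc0 c0p c00 c0H ec0 *.
have xc : val x = inl <<c0>>%MS by rewrite xp; congr inl; exact: canon_pt.
have nw := geo_walk gx.
move: gx l4 nw; case: s => [|x1 [|x2 [|x3 [|x4 [|x5 s']]]]] [gp _] l4 nw //.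
-
  have WP : ~~ (W <= <<c0>>%MS)%MS.
    rewrite genmxE; apply: contra c0H => h.
    have : (W == c0)%MS by apply: eq_sub_rank h _; rewrite rank_rV c00 rW.
    by case/andP => _ h2; apply: submx_trans h2 WH.
  have [rK1 WK1 PK1] := hypE_props WP.
  have c0K1 : (c0 <= hypE <<c0>>%MS)%MS by move: PK1; rewrite genmxE.
  have [c1 [c2 [N [fr _]]]] := caseA' rK1 WK1 c0K1 c0H.
  by exists c0, c1, c2, N.
-
  move: gp => /= /andP[a1 _].
  have [K1 [x1K pK1]] := adj_ph a1 xp.
  have [sK1 rK1 WK1] := vhp x1K.
  have c0K1 : (c0 <= K1)%MS by rewrite ec0.
  have [c1 [c2 [N [fr eK1]]]] := caseA' rK1 WK1 c0K1 c0H.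
  exists c0, c1, c2, N; split => //=.
  by rewrite x1K /K1f -(canon_of sK1 eK1).
-
  move: gp => /= /and3P[a1 a2 _].
  have [K1 [x1K pK1]] := adj_ph a1 xp.
  have [sK1 rK1 WK1] := vhp x1K.
  have [p2 [x2p p2K1]] := adj_hp a2 x1K.
  have [sp2 rp2 p2H] := vpt x2p.
  have [hv2 v2p _ _ _] := pv_props rp2 p2H.
  have c0K1 : (c0 <= K1)%MS by rewrite ec0.
  set c2 := (pv p2 - c0)%R.
  have e02 : (c0 + c2)%R = pv p2 by rewrite /c2 addrC subrK.
  have c2K1 : (c2 <= K1)%MS := subv_sub (submx_trans v2p p2K1) c0K1.
  have c2H : (c2 <= Hm)%MS by rewrite inH /c2 hfB hv2 hc0 subrr.
  have c20 : c2 != 0.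
    apply/eqP => c2e; apply: (nw x2 0%N) => //.
    exists [::]; split => //=; apply: val_inj; rewrite xp x2p.
    have : pv p2 = c0 by rewrite -e02 c2e addr0.
    by move=> e; rewrite (canon_pt sp rp pH) (canon_pt sp2 rp2 p2H) e.
  have [c1 [N [fr eK1]]] := caseA rK1 WK1 c0K1 c0H c2K1 c2H c20.
  exists c0, c1, c2, N; split => //=.
  rewrite x1K x2p /K1f -(canon_of sK1 eK1) e02.
  by rewrite -(canon_pt sp2 rp2 p2H).
-
  move: gp => /= /and4P[a1 a2 a3 _].
  have [K1 [x1K pK1]] := adj_ph a1 xp.
  have [sK1 rK1 WK1] := vhp x1K.
  have [p2 [x2p p2K1]] := adj_hp a2 x1K.
  have [sp2 rp2 p2H] := vpt x2p.
  have [hv2 v2p _ _ _] := pv_props rp2 p2H.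
  have [K3 [x3K p2K3]] := adj_ph a3 x2p.
  have [sK3 rK3 WK3] := vhp x3K.
  have c0K1 : (c0 <= K1)%MS by rewrite ec0.
  set c2 := (pv p2 - c0)%R.
  have e02 : (c0 + c2)%R = pv p2 by rewrite /c2 addrC subrK.
  have c2K1 : (c2 <= K1)%MS := subv_sub (submx_trans v2p p2K1) c0K1.
  have c2H : (c2 <= Hm)%MS by rewrite inH /c2 hfB hv2 hc0 subrr.
  have c0K3 : ~~ (c0 <= K3)%MS.
    apply/negP => h; apply: (nw x3 1%N) => //.
    exists [:: x3]; split => //=; rewrite andbT /Gamma_adj xp x3K /=.
    by rewrite -ec0.
  have v2K3 : ((c0 + c2)%R <= K3)%MS by rewrite e02; exact: submx_trans v2p p2K3.
  have [c1 [N [fr eK1 eK3 _]]] := caseB rK1 WK1 c0K1 c0H c2K1 c2H rK3 WK3 c0K3 v2K3 hc0.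
  exists c0, c1, c2, N; split => //=.
  rewrite x1K x2p x3K /K1f /K3f -(canon_of sK1 eK1) -(canon_of sK3 eK3) e02.
  by rewrite -(canon_pt sp2 rp2 p2H).
-
  move: gp => /= /and5P[a1 a2 a3 a4 _].
  have [K1 [x1K pK1]] := adj_ph a1 xp.
  have [sK1 rK1 WK1] := vhp x1K.
  have [p2 [x2p p2K1]] := adj_hp a2 x1K.
  have [sp2 rp2 p2H] := vpt x2p.
  have [hv2 v2p _ _ _] := pv_props rp2 p2H.
  have [K3 [x3K p2K3]] := adj_ph a3 x2p.
  have [sK3 rK3 WK3] := vhp x3K.
  have [p4 [x4p p4K3]] := adj_hp a4 x3K.
  have [sp4 rp4 p4H] := vpt x4p.
  have c0K1 : (c0 <= K1)%MS by rewrite ec0.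
  set c2 := (pv p2 - c0)%R.
  have e02 : (c0 + c2)%R = pv p2 by rewrite /c2 addrC subrK.
  have c2K1 : (c2 <= K1)%MS := subv_sub (submx_trans v2p p2K1) c0K1.
  have c2H : (c2 <= Hm)%MS by rewrite inH /c2 hfB hv2 hc0 subrr.
  have c0K3 : ~~ (c0 <= K3)%MS.
    apply/negP => h; apply: (nw x4 2%N) => //.
    exists [:: x3; x4]; split => //=; rewrite a4 andbT /Gamma_adj xp x3K /=.
    by rewrite -ec0 h.
  have v2K3 : ((c0 + c2)%R <= K3)%MS by rewrite e02; exact: submx_trans v2p p2K3.
  have [c1 [N [fr eK1 eK3 eCW]]] := caseB rK1 WK1 c0K1 c0H c2K1 c2H rK3 WK3 c0K3 v2K3 hc0.
  have Wc : (W <= c0 + p4)%MS.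
    apply/negPn/negP => WP.
    have [rK' WK' PK'] := hypE_props WP.
    apply: (nw x4 2%N) => //.
    exists [:: mkH rK' WK'; x4]; split => //=.
    rewrite /Gamma_adj xp x4p /= !genmxE andbT; apply/andP; split.
      by rewrite -ec0; apply: submx_trans PK'; exact: addsmxSl.
    by apply: submx_trans PK'; exact: addsmxSr.
  have c0W : ~~ (c0 <= W)%MS by apply: contra c0H => h; apply: submx_trans h WH.
  have rCW : \rank (c0 + W)%MS = 2%N by rewrite rank_addv // rW.
  have eCW2 : ((c0 + W)%MS == c0 + p4)%MS.
    apply: eq_sub_rank; first by rewrite addsmx_sub addsmxSl Wc.
    rewrite rCW; apply: leq_trans (rank_adds_le _ _) _.
    by rewrite rank_rV c00 rp4.
  have p4CW : (p4 <= (c0 + W)%MS)%MS.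
    by move/eqmxP: eCW2 => ->; exact: addsmxSr.
  have p4v : (p4 <= (c0 + c1)%R)%MS.
    by move/eqmxP: eCW => <-; rewrite sub_capmx p4CW p4K3.
  have ep4 : (p4 == (c0 + c1)%R)%MS.
    apply: eq_sub_rank p4v _; rewrite rp4; exact: rank_leq_row.
  exists c0, c1, c2, N; split => //=.
  rewrite x1K x2p x3K x4p /K1f /K3f -(canon_of sK1 eK1) -(canon_of sK3 eK3) e02.
  by rewrite -(canon_pt sp2 rp2 p2H) -(canon_of sp4 ep4).
Qed.

Lemma geo_le4 (x : V) s p : geodesic adj x s -> val x = inl p -> (size s <= 4)%N.
Proof.
move=> gx xp; rewrite leqNgt; apply/negP => l5.
have g5 := geo_take 5 gx.
have sz : size (take 5 s) = 5%N by rewrite size_takel.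
have nw := geo_walk g5.
move: g5 sz nw; case: (take 5 s) => [|x1 [|x2 [|x3 [|x4 [|x5 [|? ?]]]]]] // [gp _] _ nw.
move: gp => /= /and5P[a1 a2 a3 a4 /andP[a5 _]].
have [sp rp pH] := vpt xp.
have [hc0 c0p c00 c0H /eqmxP ec0] := pv_props rp pH.
set c0 := pv p in hc0 c0p c00 c0H ec0 *.
have [K1 [x1K _]] := adj_ph a1 xp.
have [p2 [x2p _]] := adj_hp a2 x1K.
have [K3 [x3K _]] := adj_ph a3 x2p.
have [p4 [x4p _]] := adj_hp a4 x3K.
have [K5 [x5K _]] := adj_ph a5 x4p.
have [sK5 rkK5 WK5] := vhp x5K.
have c0K5 : ~~ (c0 <= K5)%MS.
  apply/negP => h; apply: (nw x5 1%N) => //.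
  exists [:: x5]; split => //=; rewrite andbT /Gamma_adj xp x5K /=.
  by rewrite -ec0 h.
set CW := (c0 + W)%MS.
have c0W : ~~ (c0 <= W)%MS by apply: contra c0H => h; apply: submx_trans h WH.
have rCW : \rank CW = 2%N by rewrite /CW rank_addv // rW.
have CWK : ~~ (CW <= K5)%MS by apply: contra WK5 => h; apply: submx_trans (addsmxSr _ _) h.
have CWH : ~~ (CW <= Hm)%MS by apply: contra c0H => h; apply: submx_trans (addsmxSl _ _) h.
have rR : \rank (CW :&: K5)%MS = 1%N by rewrite hyp_cap // rCW.
have /eqmxP eCWH : (W == CW :&: Hm)%MS.
  apply: eq_sub_rank; first by rewrite sub_capmx addsmxSr WH.
  by rewrite hyp_cap // rCW rW.
set r := nz_row (CW :&: K5)%MS.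
have r0 : r != 0 by apply: nz_row_neq0; rewrite rR.
have rCK : (r <= CW :&: K5)%MS by exact: nz_row_sub.
have rK5 : (r <= K5)%MS := submx_trans rCK (capmxSr _ _).
have rCW' : (r <= CW)%MS := submx_trans rCK (capmxSl _ _).
have rH' : ~~ (r <= Hm)%MS.
  apply/negP => h; move/negP: WK5; apply.
  have rW' : (r <= W)%MS by rewrite eCWH sub_capmx rCW' h.
  by rewrite -(vec_eqmx rW' r0 rW).
have rA : \rank (Hm :&: K5)%MS = (n - 2)%N by rewrite hyp_cap // ?WnK // rH; alia.
set y := nz_row (Hm :&: K5)%MS.
have y0 : y != 0 by apply: nz_row_neq0; rewrite rA; alia.
have yA : (y <= Hm :&: K5)%MS by exact: nz_row_sub.
have yH : (y <= Hm)%MS := submx_trans yA (capmxSl _ _).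
have yK : (y <= K5)%MS := submx_trans yA (capmxSr _ _).
set q := (r + y)%R.
have qK : (q <= K5)%MS by rewrite addmx_sub.
have qH : ~~ (q <= Hm)%MS.
  apply: contra rH' => h; have := subv_sub h yH; by rewrite /q addrK.
have WP : ~~ (W <= c0 + q)%MS.
  apply/negP => WP.
  have CWP : (CW <= c0 + q)%MS by rewrite addsmx_sub addsmxSl WP.
  have yP : (y <= c0 + q)%MS.
    have := subv_sub (addsmxSr c0 q) (submx_trans rCW' CWP).
    by rewrite /q addrC addKr.
  have yW : ~~ (y <= W)%MS.
    apply: contra WK5 => h; by rewrite -(vec_eqmx h y0 rW).
  have c0yW : ~~ (c0 <= y + W)%MS.
    by apply: contra c0H => h; apply: submx_trans h _; rewrite addsmx_sub yH WH.
  have r3 : \rank (c0 + (y + W))%MS = 3%N by rewrite rank_addv // rank_addv // rW.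
  have : (c0 + (y + W) <= c0 + q)%MS.
    by rewrite addsmx_sub addsmxSl addsmx_sub yP WP.
  move/mxrankS; rewrite r3 => h3.
  have := leq_trans h3 (rank_adds_le _ _).
  have := rank_leq_row c0; have := rank_leq_row q; alia.
have [rK' WK' PK'] := hypE_props WP.
apply: (nw x5 3%N) => //.
exists [:: mkH rK' WK'; mkP qH; x5]; split => //=.
rewrite /Gamma_adj xp x5K /= !genmxE andbT; apply/and3P; split.
- by rewrite -ec0; apply: submx_trans PK'; exact: addsmxSl.
- by apply: submx_trans PK'; exact: addsmxSr.
- exact: qK.
Qed.

Lemma point_trans (x y : V) s t p q : val x = inl p -> val y = inl q ->
  size s = size t -> geodesic adj x s -> geodesic adj y t ->
  exists g : {perm V}, [/\ graph_aut adj g, g x = y & map g s = t].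
Proof using n3 rW rH WH.
move=> xp yq st gx gy.
have l4 := geo_le4 gx xp.
have [c0 [c1 [c2 [N [f1 e1 m1]]]]] := frame_exists gx xp l4.
have [c0' [c1' [c2' [N' [f2 e2 m2]]]]] := frame_exists gy yq (leq_trans (eq_leq (esym st)) l4).
have [g [gU /eqmxP gW /eqmxP gH g0 gs]] := transport f1 f2.
exists (act_perm gU gW gH); split.
- exact: act_perm_aut.
- by apply: val_inj; rewrite act_permE /= e1 g0 e2.
apply: (inj_map val_inj); rewrite -map_comp.
rewrite (@eq_map _ _ _ (actr g \o val)); last by move=> z /=; rewrite act_permE.
by rewrite map_comp m1 map_take gs m2 st.
Qed.

End Main.

Local Open Scope ring_scope.

Theorem proposition3p4 (F : finFieldType) (n : nat) (W Hm : 'M[F]_n) :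
  (3 <= n)%N ->
  \rank W = 1%N -> \rank Hm = n.-1 -> (W <= Hm)%MS ->
  geodesic_transitive (@Gamma_adj F n W Hm).
Proof.
move=> n3 rW rH WH x s y t st gx gy.
have n2 : (2 <= n)%N by apply: leq_trans n3.
have rdW : \rank (dl W) = n.-1 by rewrite dl_rank rW subn1.
have [g0 [g0U e1 e2]] := flag_map n2 (rdlH n3 rH) rdW (dl_anti WH) rW rH WH.
have tau : forall z : vtx W Hm, exists tz : {perm vtx W Hm},
    graph_aut (@Gamma_adj F n W Hm) tz /\ exists p, val (tz z) = inl p.
  move=> z; case ez: (val z) => [p|K].
    by exists 1%g; split; [move=> u v; rewrite !perm1 | exists p; rewrite perm1].
  exists (dual_perm n3 rW rH g0U e1 e2); split; first exact: dual_perm_aut.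
  by rewrite dual_permE /= ez; eexists.
have [tx [ax [p xp]]] := tau x.
have [ty [ay [q yq]]] := tau y.
have [g [ag gx' gs]] := point_trans n3 rW rH WH xp yq
  (etrans (size_map _ _) (etrans st (esym (size_map _ _)))) (aut_geo ax gx) (aut_geo ay gy).
exists (tx * g * ty^-1)%g; split.
- exact: aut_mul (aut_mul ax ag) (aut_inv ay).
- by rewrite !permM gx' permK.
have -> : map (tx * g * ty^-1)%g s = map ty^-1%g (map g (map tx s)).
  by rewrite -!map_comp; apply: eq_map => z; rewrite /= !permM.
by rewrite gs -map_comp (eq_map (permK ty)) map_id.
Qed.
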